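(* Let $T\subset\mathbb{R}^3$ be a non-degenerate tetrahedron, let $\mathcal{Y}^0(T)=[\mathcal{N}_{I}^0(T)]^3\oplus[\widetilde{\mathit{P}}^1(T)\otimes\mathbb{1}]$ (a space of dimension $21$), and let $E=\mathit{U}^2(T)\setminus\mathit{P}^1(T)$ be the span of the six quadratic edge base functions. Then the sum $\mathcal{Y}^0(T)+\operatorname{dev}\mathrm{D}[E]^3$ is linearly dependent, i.e. $\dim\mathcal{Y}^0(T)+\dim\operatorname{dev}\mathrm{D}[E]^3>\dim\big(\mathcal{Y}^0(T)+\operatorname{dev}\mathrm{D}[E]^3\big)$.
   Context: $\mathit{P}^p(T)$ denotes polynomials of total degree at most $p$ on $T$, $\widetilde{\mathit{P}}^p(T)$ homogeneous polynomials of degree $p$, $\mathbb{1}$ the $3\times3$ identity matrix, and $\widetilde{\mathit{P}}^1(T)\otimes\mathbb{1}=\{q\mathbb{1}:q\in\widetilde{\mathit{P}}^1(T)\}$. The lowest order Nédélec space is $\mathcal{N}_{I}^0(T)=\operatorname{span}\{\mathbf{e}_1,\mathbf{e}_2,\mathbf{e}_3,(0,z,-y)^T,(-z,0,x)^T,(y,-x,0)^T\}$ and $[\mathcal{N}_{I}^0(T)]^3$ denotes the $3\times3$ matrix fields whose rows all lie in $\mathcal{N}_{I}^0(T)$. The quadratic $H^1$-conforming polytopal space $\mathit{U}^2(T)=\mathit{P}^2(T)$ is given by the four vertex functions (the barycentric coordinates $\lambda_1,\dots,\lambda_4$, spanning $\mathit{P}^1(T)$) and one quadratic edge function per edge (e.g.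 $\lambda_i\lambda_j$ for the edge between vertices $i<j$), each vanishing on all other edges; $E=\mathit{U}^2(T)\setminus\mathit{P}^1(T)$ is the span of these six edge functions, so $\mathit{P}^2(T)=\mathit{P}^1(T)\oplus E$. For a vector field $\mathbf{v}$, $\mathrm{D}\mathbf{v}=\mathbf{v}\otimes\nabla$ is its Jacobian matrix, $\operatorname{dev}\mathbf{P}=\mathbf{P}-\frac13(\operatorname{tr}\mathbf{P})\mathbb{1}$, and $\operatorname{dev}\mathrm{D}[E]^3=\{\operatorname{dev}\mathrm{D}\mathbf{v}:\mathbf{v}\in E^3\}$. *)

(* Defs.v *)
From HB Require Import structures.
From mathcomp Require Import all_boot all_order all_algebra.
Set Implicit Arguments. Unset Strict Implicit. Unset Printing Implicit Defensive.
Import Order.TTheory GRing.Theory Num.Theory.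
Local Open Scope ring_scope.

(* Affine (degree <= 1) fields on R^3.  Points are x : 'rV[R]_3 with        *)
(* coordinates x = (x_0, x_1, x_2) = (x, y, z).                              *)
(* An affine field with values in a vectType W is encoded by its 4           *)
(* coefficients: A ord0 is the constant part, A (lift ord0 k) the            *)
(* coefficient of x_k.  The encoding is injective (see amf_eval below), so  *)
(* dimensions of spans of encodings are dimensions of the function spaces.  *)
Section Fields.
Variable R : realFieldType.

Definition amf := {ffun 'I_4 -> 'M[R]_3}.

Definition mk_amf (C0 : 'M[R]_3) (C : 'I_3 -> 'M[R]_3) : amf :=
  [ffun i : 'I_4 => if unlift ord0 i is Some k then C k else C0].

Definition amf_eval (A : amf) (x : 'rV[R]_3) : 'M[R]_3 :=
  A ord0 + \sum_(k < 3) x 0 k *: A (lift ord0 k).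

Definition rowmx_at (m : 'I_3) (r : 'rV[R]_3) : 'M[R]_3 :=
  \matrix_(i, j) (if i == m then r 0 j else 0).

Definition row_field (m : 'I_3) (c0 : 'rV[R]_3) (c : 'I_3 -> 'rV[R]_3) : amf :=
  mk_amf (rowmx_at m c0) (fun k => rowmx_at m (c k)).

Definition e3 (j : 'I_3) : 'rV[R]_3 := delta_mx 0 j.

(* Basis of the lowest-order Nedelec space N_I^0 as affine vector fields
   (constant part, coefficient of x_k):
   b0 = e1, b1 = e2, b2 = e3, b3 = (0,z,-y), b4 = (-z,0,x), b5 = (y,-x,0). *)
Definition i0 : 'I_3 := ord0.
Definition i1 : 'I_3 := lift ord0 ord0.
Definition i2 : 'I_3 := ord_max.

Definition ned_const (b : 'I_6) : 'rV[R]_3 :=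
  if (b < 3)%N then e3 (inord b) else 0.

Definition ned_coef (b : 'I_6) (k : 'I_3) : 'rV[R]_3 :=
  let bk (p q : nat) := (nat_of_ord b == p) && (nat_of_ord k == q) in
  if bk 3 1 then - e3 i2
  else if bk 3 2 then e3 i1
  else if bk 4 0 then e3 i2
  else if bk 4 2 then - e3 i0
  else if bk 5 0 then - e3 i1
  else if bk 5 1 then e3 i0
  else 0.

(* Y^0(T) = [N_I^0]^3 (+) [P~^1 (x) 1]:
   spanned by the fields with row m equal to a Nedelec basis field and
   all other rows zero, and by the fields x_k * 1 (k = 0,1,2). *)
Definition Ygens : seq amf :=
  [seq row_field p.1 (ned_const p.2) (ned_coef p.2) | p <- enum {: 'I_3 * 'I_6}]
  ++ [seq mk_amf 0 (fun l => if l == k then 1%:M else 0) | k <- enum 'I_3].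

Definition Y0 : {vspace amf} := <<Ygens>>%VS.

Definition dev (P : 'M[R]_3) : 'M[R]_3 := P - (\tr P / 3%:R) *: 1%:M.
Definition dev_amf (A : amf) : amf := [ffun i => dev (A i)].

Definition tet_nondegenerate (v : 'I_4 -> 'rV[R]_3) : Prop :=
  row_free (\matrix_(j < 3, k < 3) (v (lift ord0 j) - v ord0) 0 k).

(* M has rows (1, v_j); lambda_i(x) = ((1,x) *m invmx M) 0 i, i.e. the
   barycentric coordinates (the unique affine functions with
   lambda_i (v_j) = delta_ij when T is non-degenerate). *)
Definition vertmx (v : 'I_4 -> 'rV[R]_3) : 'M[R]_4 :=
  \matrix_(j, k) (if unlift ord0 k is Some k' then v j 0 k' else 1).

Definition bary_a (v : 'I_4 -> 'rV[R]_3) (i : 'I_4) : R := invmx (vertmx v) ord0 i.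
Definition bary_g (v : 'I_4 -> 'rV[R]_3) (i : 'I_4) : 'rV[R]_3 :=
  \row_k invmx (vertmx v) (lift ord0 k) i.

Definition bary (v : 'I_4 -> 'rV[R]_3) (i : 'I_4) (x : 'rV[R]_3) : R :=
  bary_a v i + \sum_(k < 3) x 0 k * bary_g v i 0 k.

(* D (lambda_i lambda_j e_m) = e_m (x) grad(lambda_i lambda_j), where
   grad(lambda_i lambda_j)(x) = lambda_i(x) g_j + lambda_j(x) g_i
     = (a_i g_j + a_j g_i) + sum_k x_k ((g_i)_k g_j + (g_j)_k g_i). *)
Definition DedgeE (v : 'I_4 -> 'rV[R]_3) (i j : 'I_4) (m : 'I_3) : amf :=
  row_field m (bary_a v i *: bary_g v j + bary_a v j *: bary_g v i)
    (fun k => bary_g v i 0 k *: bary_g v j + bary_g v j 0 k *: bary_g v i).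

(* dev D[E]^3, E = span of the six edge functions lambda_i lambda_j, i < j *)
Definition devDEgens (v : 'I_4 -> 'rV[R]_3) : seq amf :=
  [seq dev_amf (DedgeE v p.1.1 p.1.2 p.2)
  | p : ('I_4 * 'I_4) * 'I_3 <- enum {: ('I_4 * 'I_4) * 'I_3}
  & (nat_of_ord p.1.1 < nat_of_ord p.1.2)%N].

Definition devDE (v : 'I_4 -> 'rV[R]_3) : {vspace amf} := <<devDEgens v>>%VS.

End Fields.

(* Main.v *)
Require Import Defs.
From HB Require Import structures.
From mathcomp Require Import all_boot all_order all_algebra ring.
Set Implicit Arguments. Unset Strict Implicit. Unset Printing Implicit Defensive.
Import Order.TTheory GRing.Theory Num.Theory.
Local Open Scope ring_scope.

Section S.
Variable R : realFieldType.
Variable v : 'I_4 -> 'rV[R]_3.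

Lemma vert_unit : tet_nondegenerate v -> vertmx v \in unitmx.
Proof.
move=> Hnd; rewrite -row_free_unit; apply: inj_row_free => u Hu.
have Hc : forall c, \sum_(j < 4) u 0 j * vertmx v j c = 0.
  by move=> c; have := congr1 (fun M : 'M[R]_(1,4) => M 0 c) Hu; rewrite !mxE.
have H0 := Hc ord0.
have Hk : forall k : 'I_3, \sum_(j < 4) u 0 j * v j 0 k = 0.
  move=> k; rewrite -[RHS](Hc (lift ord0 k)); apply: eq_bigr => j _.
  by rewrite mxE liftK.
have H0' : \sum_(j < 4) u 0 j = 0.
  by rewrite -[RHS]H0; apply: eq_bigr => j _; rewrite mxE unlift_none mulr1.
set u' : 'rV[R]_3 := \row_j u 0 (lift ord0 j).
have Hu' : u' = 0.
  apply: (row_free_inj Hnd); rewrite mul0mx; apply/rowP => k.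
  rewrite !mxE.
  under eq_bigr do rewrite !mxE mulrBr.
  rewrite sumrB -mulr_suml.
  have := Hk k; rewrite big_ord_recl => /eqP; rewrite addrC addr_eq0 => /eqP ->.
  move/eqP: H0'; rewrite big_ord_recl addrC addr_eq0 => /eqP ->.
  by rewrite mulNr opprK addNr.
apply/rowP => j; rewrite mxE.
case: (unliftP ord0 j) => [j'|] ->.
  by have := congr1 (fun M : 'M[R]_(1,3) => M 0 j') Hu'; rewrite !mxE.
move/eqP: H0'; rewrite big_ord_recl addr_eq0 => /eqP ->.
rewrite big1 ?oppr0 // => i _.
by have := congr1 (fun M : 'M[R]_(1,3) => M 0 i) Hu'; rewrite !mxE.
Qed.

Lemma bary_sum_g (Hnd : tet_nondegenerate v) (k : 'I_3) :
  \sum_(i < 4) bary_g v i 0 k = 0.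
Proof.
have := congr1 (fun M : 'M[R]_4 => M (lift ord0 k) ord0) (mulVmx (vert_unit Hnd)).
rewrite !mxE /= => H; rewrite -[RHS]H; apply: eq_bigr => i _; rewrite !mxE unlift_none mulr1.
by [].
Qed.

Lemma bary_sum_gv (Hnd : tet_nondegenerate v) (k l : 'I_3) :
  \sum_(i < 4) bary_g v i 0 k * v i 0 l = (k == l)%:R.
Proof.
have := congr1 (fun M : 'M[R]_4 => M (lift ord0 k) (lift ord0 l)) (mulVmx (vert_unit Hnd)).
rewrite !mxE (inj_eq (@lift_inj _ ord0)) => <-; apply: eq_bigr => i _.
by rewrite !mxE liftK.
Qed.
Lemma key_id (K : comRingType) (g h p q : 'I_4 -> K) :
  \sum_(i < 4) \sum_(j < 4 | (i < j)%N) (- ((p i - p j) * (q i - q j))) * (g i * h j + g j * h i)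
  = - ((\sum_(i < 4) p i * q i * g i) * (\sum_(i < 4) h i))
    - (\sum_(i < 4) g i) * (\sum_(i < 4) p i * q i * h i)
    + (\sum_(i < 4) p i * g i) * (\sum_(i < 4) q i * h i)
    + (\sum_(i < 4) q i * g i) * (\sum_(i < 4) p i * h i).
Proof.
under eq_bigr do rewrite big_mkcond.
rewrite !big_ord_recl !big_ord0 /=.
ring.
Qed.

Definition cc (m : 'I_3) (i j : 'I_4) : R :=
  - ((v i 0 i0 - v j 0 i0) * (v i 0 m - v j 0 m)).

Definition W : amf R :=
  \sum_(m < 3) \sum_(i < 4) \sum_(j < 4 | (i < j)%N) cc m i j *: DedgeE v i j m.

Lemma Wlin (Hnd : tet_nondegenerate v) (k : 'I_3) :
  W (lift ord0 k) = (k == i0)%:R *: 1%:M + delta_mx k i0.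
Proof.
apply/matrixP => r l.
rewrite /W !sum_ffunE summxE.
under eq_bigr do rewrite sum_ffunE summxE.
under eq_bigr do under eq_bigr do rewrite sum_ffunE summxE.
under eq_bigr do under eq_bigr do under eq_bigr do rewrite !ffunE liftK !mxE.
rewrite (bigD1 r) //= [X in _ + X]big1 ?addr0; last first.
  move=> m /negbTE Hm; rewrite big1 // => i _; rewrite big1 // => j _.
  by rewrite eq_sym Hm mulr0.
rewrite eqxx /cc.
pose N := invmx (vertmx v).
rewrite (key_id (fun i => N (lift ord0 k) i) (fun i => N (lift ord0 l) i)
   (fun i => v i 0 i0) (fun i => v i 0 r)).
have Hg := bary_sum_g Hnd; have Hgv := bary_sum_gv Hnd.
have E1 : forall k, \sum_(i < 4) N (lift ord0 k) i = 0.
  by move=> k'; rewrite -[RHS](Hg k'); apply: eq_bigr => i _; rewrite mxE.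
have E2 : forall k l, \sum_(i < 4) v i 0 l * N (lift ord0 k) i = (k == l)%:R.
  by move=> k' l'; rewrite -[RHS](Hgv k' l'); apply: eq_bigr => i _; rewrite mxE mulrC.
rewrite !E1 !E2 mul0r mulr0 oppr0 !add0r !mxE (eq_sym l r) (eq_sym k r).
by case: (k == i0); case: (r == l); case: (r == k); case: (l == i0);
  rewrite /= ?mulr1 ?mulr0 ?mul1r ?addr0 ?add0r.
Qed.

Lemma devD (P Q : 'M[R]_3) : dev (P + Q) = dev P + dev Q.
Proof. by rewrite /dev mxtraceD mulrDl scalerDl opprD addrACA. Qed.
Lemma devZ a (P : 'M[R]_3) : dev (a *: P) = a *: dev P.
Proof. by rewrite /dev mxtraceZ -mulrA -scalerA scalerBr. Qed.
Lemma dev0 : dev (0 : 'M[R]_3) = 0.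
Proof. by rewrite /dev linear0 mul0r scale0r subr0. Qed.
Lemma dev_amfD (A B : amf R) : dev_amf (A + B) = dev_amf A + dev_amf B.
Proof. by apply/ffunP => x; rewrite !ffunE devD. Qed.
Lemma dev_amfZ a (A : amf R) : dev_amf (a *: A) = a *: dev_amf A.
Proof. by apply/ffunP => x; rewrite !ffunE devZ. Qed.
Lemma dev_amf0 : dev_amf (0 : amf R) = 0.
Proof. by apply/ffunP => x; rewrite !ffunE dev0. Qed.

Lemma dev_amf_sum (I : finType) (P : pred I) (F : I -> amf R) :
  dev_amf (\sum_(i | P i) F i) = \sum_(i | P i) dev_amf (F i).
Proof. exact: (big_morph _ dev_amfD dev_amf0). Qed.

Lemma w_in_devDE : dev_amf W \in devDE v.
Proof.
rewrite /W dev_amf_sum; apply: memv_suml => m _.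
rewrite dev_amf_sum; apply: memv_suml => i _.
rewrite dev_amf_sum; apply: memv_suml => j Hij.
rewrite dev_amfZ; apply: memvZ; apply: memv_span.
apply/mapP; exists ((i, j), m) => //.
by rewrite mem_filter mem_enum andbT.
Qed.

Lemma gen_in_Y0 m b : row_field m (ned_const R b) (ned_coef R b) \in Y0 R.
Proof.
apply: memv_span; rewrite mem_cat; apply/orP; left.
by apply: (map_f (fun p : 'I_3 * 'I_6 => row_field p.1 (ned_const R p.2) (ned_coef R p.2)) (x := (m, b))); rewrite mem_enum.
Qed.

Lemma id_in_Y0 k : mk_amf 0 (fun l => if l == k then 1%:M else 0) \in Y0 R.
Proof.
apply: memv_span; rewrite mem_cat; apply/orP; right.
by apply: (map_f (fun k : 'I_3 => mk_amf 0 (fun l => if l == k then 1%:M else 0))); rewrite mem_enum.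
Qed.

Lemma rowmx_delta m j : rowmx_at m (e3 R j) = delta_mx m j :> 'M[R]_3.
Proof.
by apply/matrixP => r l; rewrite !mxE; case: (r == m). Qed.
Lemma rowmx0 m : rowmx_at m 0 = 0 :> 'M[R]_3.
Proof. by apply/matrixP => r l; rewrite !mxE; case: ifP. Qed.

Lemma const_in_Y0 (C : 'M[R]_3) : mk_amf C (fun _ => 0) \in Y0 R.
Proof.
have -> : mk_amf C (fun _ => 0) =
   \sum_(m < 3) \sum_(j < 3) C m j *: row_field m (ned_const R (widen_ord (isT : (3 <= 6)%N) j))
      (ned_coef R (widen_ord (isT : (3 <= 6)%N) j)).
  apply/ffunP => x; rewrite sum_ffunE.
  under eq_bigr do rewrite sum_ffunE.
  rewrite !ffunE; case: (unliftP ord0 x) => [k|] ->.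
    rewrite big1 // => m _; rewrite big1 // => j _.
    rewrite !ffunE liftK.
    have -> : ned_coef R (widen_ord (isT : (3 <= 6)%N) j) k = 0.
      by rewrite /ned_coef /=; case: j => [[|[|[|]]] ?]; case: k => [[|[|[|]]] ?].
    by rewrite rowmx0 scaler0.
  rewrite [LHS]matrix_sum_delta; apply: eq_bigr => m _; apply: eq_bigr => j _.
  rewrite !ffunE unlift_none /ned_const /= ltn_ord.
  have -> : inord j = j :> 'I_3 by apply: val_inj; rewrite /= inordK.
  by rewrite rowmx_delta.
apply: memv_suml => m _; apply: memv_suml => j _; apply: memvZ; exact: gen_in_Y0.
Qed.

Definition G : amf R := mk_amf 0 (fun k => (k == i0)%:R *: 1%:M + delta_mx k i0).
Definition b4 : 'I_6 := @Ordinal 6 4 isT.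
Definition b5 : 'I_6 := @Ordinal 6 5 isT.

Lemma three_neq0 : (3%:R : R) != 0.
Proof. by rewrite pnatr_eq0. Qed.

Lemma devG : dev_amf G = row_field i1 (ned_const R b5) (ned_coef R b5)
   - row_field i2 (ned_const R b4) (ned_coef R b4)
   + (2%:R / 3%:R) *: mk_amf 0 (fun l => if l == i0 then 1%:M else 0).
Proof.
apply/ffunP => x; rewrite !ffunE; case: (unliftP ord0 x) => [k|] _.
  apply/matrixP => r l.
  rewrite /dev /mxtrace !mxE !big_ord_recl big_ord0 !mxE /=.
  case: k => [[|[|[|?]]] Hk] //; case: r => [[|[|[|?]]] Hr] //; case: l => [[|[|[|?]]] Hl] //;
  by rewrite !mxE /=; field.
by rewrite /ned_const /b4 /b5 /= !rowmx0 dev0 scaler0 subr0 addr0.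
Qed.

Lemma devG_in_Y0 : dev_amf G \in Y0 R.
Proof.
rewrite devG; apply: memvD; last by apply: memvZ; exact: id_in_Y0.
by apply: memvB; exact: gen_in_Y0.
Qed.

Lemma W_split (Hnd : tet_nondegenerate v) : W = mk_amf (W ord0) (fun _ => 0) + G.
Proof.
apply/ffunP => x; rewrite !ffunE; case: (unliftP ord0 x) => [k|] ->.
  by rewrite Wlin // add0r.
by rewrite addr0.
Qed.

Lemma w_in_Y0 (Hnd : tet_nondegenerate v) : dev_amf W \in Y0 R.
Proof.
rewrite (W_split Hnd) dev_amfD; apply: memvD; last exact: devG_in_Y0.
have -> : dev_amf (mk_amf (W ord0) (fun _ => 0)) = mk_amf (dev (W ord0)) (fun _ => 0).
  apply/ffunP => x; rewrite !ffunE; case: (unlift ord0 x) => // _; exact: dev0.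
exact: const_in_Y0.
Qed.

Lemma w_neq0 (Hnd : tet_nondegenerate v) : dev_amf W != 0.
Proof.
apply/eqP => /(congr1 (fun A : amf R => A (lift ord0 i1) i1 i0)).
rewrite !ffunE Wlin // /dev !mxE /=.
by rewrite !mulr0 subr0 add0r => /eqP; rewrite oner_eq0.
Qed.

End S.

Unset Implicit Arguments.
Theorem mainTheorem2 (R : realFieldType) (v : 'I_4 -> 'rV[R]_3) :
  tet_nondegenerate v ->
  (\dim (Y0 R + devDE v)%VS < \dim (Y0 R) + \dim (devDE v))%N.
Proof.
move=> Hnd.
have [le eqC] := dimv_add_leqif (Y0 R) (devDE v).
rewrite ltn_neqAle le andbT eqC subv0.
apply/negP => /eqP H.
have : dev_amf (W v) \in (Y0 R :&: devDE v)%VS.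
  by rewrite memv_cap w_in_Y0 // w_in_devDE.
by rewrite H memv0 (negbTE (w_neq0 Hnd)).
Qed.
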